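(* Let $I,S,C\subseteq G$ be pairwise disjoint. Then $I$ is AD-separated from $S$ by $C$ if and only if there exists a closed subset $K$ of $G$ such that $S\subseteq K$, $P(K)\subseteq C$, $I\subseteq N'(K)$ and $D(K)\cap C=\emptyset$.
   Context: $G$ is a finite set of nodes forming a DAG. $P(s)$: parents of $s$; $s\sqsubseteq v$: directed path (possibly trivial) from $s$ to $v$; $s\sqsubset v$: additionally $s\neq v$; $D(s)=\{v:s\sqsubset v\}$. For $K\subseteq G$: $P(K)=(\bigcup_{s\in K}P(s))\setminus K$, $D(K)=(\bigcup_{s\in K}D(s))\setminus K$, $N(K)=G\setminus(K\cup D(K))$, $N'(K)=N(K)\setminus P(K)$; $K$ is closed if $s\sqsubseteq k\sqsubseteq t$ with $s,t\in K$, $k\in G$ implies $k\in K$. A path $s_1,\dots,s_n$ ($n\geq1$) is a sequence of nodes in which consecutive nodes are joined by an edge in either direction. It is blocked by $C\subseteq G$ if at least one holds: (B1) $s_1\in C$; (B2) some $s_i$ with $1<i<n$ has $s_i\to s_{i+1}$ and $s_i\in C$; (B3) some $s_i$ with $1<i<n$ has $s_{i-1}\to s_i\leftarrow s_{i+1}$, $s_i\notin C$ and $D(s_i)\cap C=\emptyset$; (B4) $s_n\in C$. $I$ is AD-separated from $S$ by $C$ if every path $i=s_1,\dots,s_n=s$ ($n\ge1$) from any $i\in I$ to any $s\in S$ is blocked by $C$. *)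

(* Defs.v *)
From mathcomp Require Import all_boot.
Set Implicit Arguments. Unset Strict Implicit. Unset Printing Implicit Defensive.

Section DAG.
Variables (T : finType) (e : rel T).
(* e x y  means there is a directed edge x -> y. *)

Definition acyclic_rel : Prop := forall x y, e x y -> ~~ connect e y x.

(* s ⊑ v  is  connect e s v ;  s ⊏ v  is  connect e s v && (s != v) *)
Definition parents (s : T) : {set T} := [set p | e p s].
Definition desc (s : T) : {set T} := [set v | connect e s v && (s != v)].

Definition parK (K : {set T}) : {set T} := (\bigcup_(s in K) parents s) :\: K.
Definition descK (K : {set T}) : {set T} := (\bigcup_(s in K) desc s) :\: K.
Definition nondescK (K : {set T}) : {set T} := ~: (K :|: descK K).
Definition nondescK' (K : {set T}) : {set T} := nondescK K :\: parK K.

Definition closedK (K : {set T}) : Prop :=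
  forall s k t, s \in K -> t \in K -> connect e s k -> connect e k t -> k \in K.

Definition adj : rel T := fun x y => e x y || e y x.

(* A path s_1,...,s_n (n >= 1) is represented as x :: p with path adj x p;
   in 0-based indices, l = x :: p has nodes nth x l 0, ..., nth x l (n-1). *)
Definition blocked (C : {set T}) (x : T) (p : seq T) : Prop :=
  let l := x :: p in
  let n := size l in
  let s := nth x l in
  [\/ x \in C,
      (exists i, [/\ 0 < i, i.+1 < n, e (s i) (s i.+1) & s i \in C]),
      (exists i, [/\ 0 < i < n.-1, e (s i.-1) (s i), e (s i.+1) (s i),
                    s i \notin C & [disjoint desc (s i) & C]])
    | last x p \in C].

Definition ADsep (I S C : {set T}) : Prop :=
  forall i s (p : seq T), i \in I -> s \in S -> path adj i p -> last i p = s ->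
    blocked C i p.

End DAG.

(* Main.v *)
From Stdlib Require Import Classical ClassicalEpsilon.
Require Import Defs.
From mathcomp Require Import all_boot.
Set Implicit Arguments. Unset Strict Implicit. Unset Printing Implicit Defensive.

Lemma mydisjP (T : finType) (A B : {pred T}) :
  reflect (forall x, x \in A -> x \in B -> False) [disjoint A & B].
Proof.
apply: (iffP pred0P) => /= H.
- by move=> x hA hB; move: (H x); rewrite /= hA hB.
- move=> x /=; apply/negP => /andP[hA hB]; exact: H hA hB.
Qed.

Definition pb (P : Prop) : bool := if excluded_middle_informative P then true else false.
Lemma pbP (P : Prop) : pb P <-> P.
Proof. by rewrite /pb; case: excluded_middle_informative. Qed.

Fixpoint goodf (T : finType) (e : rel T) (C : {set T}) (into : bool) (x : T) (p : seq T) : bool :=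
  match p with
  | [::] => true
  | y :: q => ~~ (e x y && (x \in C)) &&
              ~~ [&& into, e y x, x \notin C & [disjoint desc e x & C]] &&
              goodf e C (e x y) y q
  end.

Definition Gat (T : finType) (e : rel T) (C : {set T}) into x p (d : T) i :=
  ~~ (e (nth d (x :: p) i) (nth d p i) && (nth d (x :: p) i \in C)) &&
  ~~ [&& (if i is j.+1 then e (nth d (x :: p) j) (nth d (x :: p) i) else into),
         e (nth d p i) (nth d (x :: p) i), nth d (x :: p) i \notin C &
         [disjoint desc e (nth d (x :: p) i) & C]].

Lemma GatS (T : finType) (e : rel T) (C : {set T}) into x y q d j :
  Gat e C into x (y :: q) d j.+1 = Gat e C (e x y) y q d j.
Proof. by case: j. Qed.

Lemma goodfP (T : finType) (e : rel T) (C : {set T}) into x p d :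
  goodf e C into x p <-> (forall i, i < size p -> Gat e C into x p d i).
Proof.
elim: p x into => [|y q IH] x into /=.
  by split => // _ i; rewrite ltn0.
split.
- move=> /andP[h0 /IH H] [|j] hj; first exact: h0.
  by rewrite GatS; apply: H.
- move=> H; apply/andP; split; first exact: (H 0).
  apply/IH => j hj; by move: (H j.+1 hj); rewrite GatS.
Qed.

Lemma good_unblocked (T : finType) (e : rel T) (C : {set T}) x p :
  x \notin C -> last x p \notin C -> goodf e C false x p -> ~ blocked e C x p.
Proof.
move=> hx hl /(goodfP _ _ _ _ _ x) H.
case=> [h|[i [i0 ilt he hc]]|[i [/andP[i0 ilt] h1 h2 h3 h4]]|h].
- by rewrite h in hx.
- rewrite /= ltnS in ilt; move: (H i ilt); rewrite /Gat.
  by rewrite /= in he; rewrite he hc.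
- rewrite /= in ilt; move: (H i ilt); rewrite /Gat.
  case: i i0 ilt h1 h2 h3 h4 => // j _ _ /= h1 h2 h3 h4.
  by rewrite h1 h2 h3 h4 /= andbF.
- by rewrite h in hl.
Qed.

Lemma unblocked_good (T : finType) (e : rel T) (C : {set T}) x p :
  ~ blocked e C x p -> goodf e C false x p.
Proof.
move=> nb; apply/(goodfP _ _ _ _ _ x) => i ilt.
case: i ilt => [|j] ilt; rewrite /Gat /=.
- have hx : x \notin C by apply/negP => h; apply: nb; apply: Or41.
  by rewrite (negbTE hx) andbF.
- apply/andP; split.
  + apply/negP => /andP[he hc]; apply: nb; apply: Or42; exists j.+1; split => //.
  + apply/negP => /and4P[h1 h2 h3 h4]; apply: nb; apply: Or43; exists j.+1; split => //.
Qed.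

Lemma asym (T : finType) (e : rel T) : acyclic_rel e -> forall x y, e x y -> ~~ e y x.
Proof. by move=> dag x y h; apply/negP => h'; move: (dag _ _ h); rewrite (connect1 h'). Qed.

Lemma goodf_mono (T : finType) (e : rel T) (C : {set T}) x p :
  goodf e C true x p -> goodf e C false x p.
Proof. by case: p => //= y q /andP[/andP[-> _] ->]. Qed.

Definition Kp (T : finType) (e : rel T) (C S : {set T}) (into : bool) v :=
  exists p, [/\ path (adj e) v p, last v p \in S & goodf e C into v p].

Lemma L1 (T : finType) (e : rel T) (C S : {set T}) (dag : acyclic_rel e) u k :
  Kp e C S true k -> e u k -> u \notin C -> Kp e C S true u.
Proof.
case=> p [hp hl hg] euk hu; exists (k :: p); split => //=.
- by rewrite hp andbT /adj euk.
- by rewrite euk (negbTE hu) (negbTE (asym dag euk)) /= hg.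
Qed.

Lemma L2 (T : finType) (e : rel T) (C S : {set T}) (dag : acyclic_rel e) k t :
  Kp e C S true k -> e k t -> (t \in C) || ~~ [disjoint desc e t & C] ->
  Kp e C S true t.
Proof.
case=> p [hp hl hg] ekt ht; exists (k :: p); split => //=.
- by rewrite hp andbT /adj ekt orbT.
- rewrite (negbTE (asym dag ekt)) ekt /= goodf_mono // andbT.
  by case/orP: ht => [-> //| /negbTE ->]; rewrite andbF.
Qed.

Lemma Lf (T : finType) (e : rel T) (C S : {set T}) (dag : acyclic_rel e) k t :
  Kp e C S false k -> e k t -> Kp e C S false t.
Proof.
case=> p [hp hl hg] ekt; exists (k :: p); split => //=.
- by rewrite hp andbT /adj ekt orbT.
- by rewrite (negbTE (asym dag ekt)).
Qed.

Lemma Kf_conn (T : finType) (e : rel T) (C S : {set T}) (dag : acyclic_rel e) k x :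
  Kp e C S false k -> connect e k x -> Kp e C S false x.
Proof.
move=> hk /connectP [q hq ->]; elim: q k hk hq => //= y q IH k hk /andP[eky hq].
by apply: IH hq; apply: Lf eky.
Qed.

Lemma fwd (T : finType) (e : rel T) (C S : {set T}) (dag : acyclic_rel e) x y c :
  Kp e C S true x -> connect e x y -> connect e y c -> c \in C -> Kp e C S true y.
Proof.
move=> hx /connectP[q hq ->]; elim: q x hx hq => //= z q IH x hx /andP[exz hq] hc cC.
have hzc : connect e z c.
  by apply: connect_trans hc; apply/connectP; exists q.
apply: (IH _ _ hq hc cC); apply: (L2 dag hx exz).
case: (eqVneq z c) => [ezc | nzc]; first by rewrite ezc cC.
apply/orP; right; apply/negP => /mydisjP H; apply: (H c) => //.
by rewrite inE hzc nzc.
Qed.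

Lemma bwd (T : finType) (e : rel T) (C S : {set T}) (dag : acyclic_rel e) y t :
  connect e y t -> Kp e C S true t -> (forall c, connect e y c -> c \notin C) ->
  Kp e C S true y.
Proof.
move=> /connectP[q hq ->]; elim: q y hq => [|z q IH] y //= /andP[eyz hq] ht hnc.
apply: (L1 dag _ eyz); last exact: hnc y (connect0 _ _).
apply: IH hq ht _ => c hc; apply: hnc; exact: connect_trans (connect1 eyz) hc.
Qed.

Lemma desc_into (T : finType) (e : rel T) (K : {set T}) x s :
  x \notin K -> s \in K -> connect e s x -> x \in descK e K.
Proof.
move=> hx hs hsx; rewrite in_setD hx /=; apply/bigcupP; exists s => //.
rewrite inE hsx /=; apply: contraNneq hx => <-; exact: hs.
Qed.

Lemma descK_inv (T : finType) (e : rel T) (K : {set T}) x :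
  x \in descK e K -> x \notin K /\ exists2 s, s \in K & connect e s x.
Proof.
rewrite in_setD => /andP[hx /bigcupP[s hs]]; rewrite inE => /andP[hsx _].
by split => //; exists s.
Qed.

Lemma descD (T : finType) (e : rel T) (C K : {set T}) x :
  closedK e K -> [disjoint descK e K & C] -> x \in descK e K ->
  [disjoint desc e x & C].
Proof.
move=> hcl hDC /descK_inv [hxK [s hs hsx]]; apply/mydisjP => d.
rewrite inE => /andP[hxd _] hdC.
have hdK : d \notin K.
  by apply/negP => hdK; move/negP: hxK; apply; apply: (hcl s x d).
have := desc_into hdK hs (connect_trans hsx hxd).
by move/(disjointFr hDC); rewrite hdC.
Qed.

Lemma claim (T : finType) (e : rel T) (C K : {set T}) (dag : acyclic_rel e) :
  closedK e K -> parK e K \subset C -> [disjoint descK e K & C] ->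
  forall p x into, path (adj e) x p -> last x p \in K -> goodf e C into x p ->
  x \in K \/ (x \in descK e K /\ ~~ into).
Proof.
move=> hcl hPC hDC; elim => [|y q IH] x into /=; first by move=> _ ->; left.
move=> /andP[axy hq] hl /andP[/andP[ha hb] hg].
case: (boolP (x \in K)) => hxK; first by left.
have [eyx [s hs hsx]] : e y x /\ exists2 s, s \in K & connect e s x.
  case: (IH _ _ hq hl hg) => [hyK | [hyD nexy]].
  - have exy_false : e x y = false.
      apply/negP => exy.
      have xP : x \in parK e K.
        by rewrite in_setD hxK /=; apply/bigcupP; exists y => //; rewrite inE.
      by rewrite exy (subsetP hPC _ xP) in ha.
    have eyx : e y x by move: axy; rewrite /adj exy_false.
    by split => //; exists y => //; apply: connect1.
  - have eyx : e y x by move: axy; rewrite /adj (negbTE nexy).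
    case: (descK_inv hyD) => _ [s hs hsy]; split => //; exists s => //.
    exact: connect_trans hsy (connect1 eyx).
have xD := desc_into hxK hs hsx.
right; split => //; apply/negP => hi; move: hb.
by rewrite hi eyx (disjointFr hDC xD) (descD hcl hDC xD).
Qed.

Theorem proposition2 (T : finType) (e : rel T) (dag : acyclic_rel e)
    (I S C : {set T})
    (dIS : [disjoint I & S]) (dIC : [disjoint I & C]) (dSC : [disjoint S & C]) :
  ADsep e I S C <->
  exists K : {set T},
    [/\ closedK e K, S \subset K, parK e K \subset C,
        I \subset nondescK' e K & [disjoint descK e K & C]].
Proof.
split.
- move=> hsep.
  pose K := [set v | pb (Kp e C S true v)].
  have inK v : v \in K <-> Kp e C S true v by rewrite inE; apply: pbP.
  have noKf i : i \in I -> ~ Kp e C S false i.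
    move=> hi [q [hq hl hg]].
    apply: (good_unblocked _ _ hg (hsep i (last i q) q hi hl hq erefl)).
    + by rewrite (disjointFr dIC hi).
    + by rewrite (disjointFr dSC hl).
  have noIC i : i \in I -> i \notin C by move=> hi; rewrite (disjointFr dIC hi).
  exists K; split.
  + move=> s k t /inK hs /inK ht hsk hkt; apply/inK.
    case: (boolP [exists c, connect e k c && (c \in C)]) =>
      [/existsP[c /andP[hkc hcC]] | /existsPn hn].
    * exact: (fwd dag hs hsk hkc hcC).
    * apply: (bwd dag hkt ht) => c hc; move: (hn c); by rewrite hc.
  + by apply/subsetP => s hs; apply/inK; exists [::].
  + apply/subsetP => u; rewrite in_setD => /andP[hnK /bigcupP[k /inK hk]].
    rewrite inE => euk; apply/negPn/negP => huC.
    by move/negP: hnK; apply; apply/inK; apply: (L1 dag hk euk huC).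
  + apply/subsetP => i hi.
    have nK : i \notin K.
      apply/negP => /inK [q [hq hl hg]]; apply: (noKf i hi).
      by exists q; split => //; apply: goodf_mono.
    have nD : i \notin descK e K.
      apply/negP => /descK_inv [_ [k /inK [q [hq hl hg]] hki]].
      apply: (noKf i hi); apply: (Kf_conn dag _ hki).
      by exists q; split => //; apply: goodf_mono.
    have nP : i \notin parK e K.
      apply/negP; rewrite in_setD => /andP[hnK /bigcupP[k /inK hk]].
      rewrite inE => eik; move/negP: hnK; apply; apply/inK.
      exact: (L1 dag hk eik (noIC i hi)).
    by rewrite /nondescK' /nondescK in_setD in_setC in_setU (negbTE nK) (negbTE nD) nP.
  + apply/mydisjP => d /descK_inv [hdK [k /inK hk hkd]] hdC.
    by move/negP: hdK; apply; apply/inK; apply: (fwd dag hk hkd (connect0 _ d) hdC).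
- case=> K [hcl hSK hPC hIN hDC] i s p hi hs hp hl.
  apply: NNPP => nb; have hg := unblocked_good nb.
  have hlK : last i p \in K by rewrite hl (subsetP hSK).
  move: (subsetP hIN i hi); rewrite /nondescK' /nondescK in_setD in_setC in_setU.
  by case: (claim dag hcl hPC hDC hp hlK hg) => [-> | [-> _]]; rewrite ?orbT andbF.
Qed.
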